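(* Let $L$ spin-orbitals be indexed by $\{1,\dots,L\}$, let $1\le N_{\mathrm{occ}}<L$, and let $\Psi_0$ be the Fermi vacuum, i.e. the Slater determinant in which spin-orbitals $1,\dots,N_{\mathrm{occ}}$ are occupied and the others empty. Let $\hat C$ be a chain (product in a fixed order) of $n$ excitation operators $\hat E^a_i=\hat a^\dagger_a\hat a_i$ and $n$ deexcitation operators $\hat D^i_a=\hat a^\dagger_i\hat a_a$ ($i\le N_{\mathrm{occ}}<a$), and let $S$ be the word obtained by replacing, from left to right, each deexcitation operator by ''('' and each excitation operator by '')''. Let $N\ge1$, $K\in\{0,\dots,2n\}$, and let $\hat C^N_K$ be the chain obtained by inserting, immediately after the $K$-th (de)excitation operator of $\hat C$, the product $\hat a^\dagger_{r_1}\cdots\hat a^\dagger_{r_N}\hat a_{s_1}\cdots\hat a_{s_N}$ with arbitrary $r_1,\dots,r_N,s_1,\dots,s_N\in\{1,\dots,L\}$. If $S$ is not a Dyck word, then $\langle\Psi_0|\hat C^N_K|\Psi_0\rangle=0$.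
   Context: A Dyck word is a finite word over $\{(,)\}$ with as many opening as closing brackets, every prefix of which contains at least as many opening as closing brackets. *)

(* Defs.v *)
From mathcomp Require Import all_boot all_algebra.
Set Implicit Arguments. Unset Strict Implicit. Unset Printing Implicit Defensive.
Import GRing.Theory.
Local Open Scope ring_scope.

(* Spin-orbitals 1..L are represented by 'I_L (orbital p+1 <-> ordinal p).
   A Fock-space vector is a coefficient function on occupation sets
   (basis = Slater determinants |S>, orbitals ordered increasingly). *)
Definition fstate (L : nat) := {set 'I_L} -> int.

Definition fsign L (S : {set 'I_L}) (p : 'I_L) : int :=
  (-1) ^+ #|[set q in S | (q < p)%N]|.

(* creation a^dagger_p : |S> |-> fsign S p |S u {p}> if p notin S, else 0 *)
Definition cre L (p : 'I_L) (v : fstate L) : fstate L :=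
  fun T => if p \in T then fsign (T :\ p) p * v (T :\ p) else 0.

(* annihilation a_p : |S> |-> fsign S p |S \ {p}> if p in S, else 0 *)
Definition ann L (p : 'I_L) (v : fstate L) : fstate L :=
  fun T => if p \notin T then fsign (p |: T) p * v (p |: T) else 0.

Definition ladder L (o : bool * 'I_L) (v : fstate L) : fstate L :=
  if o.1 then cre o.2 v else ann o.2 v.

Definition apply_word L (w : seq (bool * 'I_L)) (v : fstate L) : fstate L :=
  foldr (@ladder L) v w.

Definition basis L (S : {set 'I_L}) : fstate L := fun T => (T == S)%:R.

Definition vacuum L (Nocc : nat) : {set 'I_L} := [set i : 'I_L | (i < Nocc)%N].

Definition expval L (Nocc : nat) (w : seq (bool * 'I_L)) : int :=
  apply_word w (basis (vacuum L Nocc)) (vacuum L Nocc).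

(* A (de)excitation operator is a triple (d, i, a):
   d = false : excitation   E^a_i = a^dagger_a a_i
   d = true  : deexcitation D^i_a = a^dagger_i a_a *)
Definition exop L := (bool * 'I_L * 'I_L)%type.

Definition valid_exop L (Nocc : nat) (e : exop L) : bool :=
  (e.1.2 < Nocc)%N && (Nocc <= e.2)%N.

Definition exop_word L (e : exop L) : seq (bool * 'I_L) :=
  let '(d, i, a) := e in
  if d then [:: (true, i); (false, a)] else [:: (true, a); (false, i)].

Definition chain_word L (C : seq (exop L)) : seq (bool * 'I_L) :=
  flatten (map (@exop_word L) C).

Definition insert_word L N (r s : 'I_N -> 'I_L) : seq (bool * 'I_L) :=
  [seq (true, r k) | k <- enum 'I_N] ++ [seq (false, s k) | k <- enum 'I_N].

Definition chain_insert L N (C : seq (exop L)) (K : nat) (r s : 'I_N -> 'I_L)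
  : seq (bool * 'I_L) :=
  chain_word (take K C) ++ insert_word r s ++ chain_word (drop K C).

Definition paren_word L (C : seq (exop L)) : seq bool := [seq e.1.1 | e <- C].

(* Dyck word over {(, )} with "(" = true, ")" = false *)
Definition is_dyck (s : seq bool) : Prop :=
  (forall k : nat, (count_mem false (take k s) <= count_mem true (take k s))%N)
  /\ count_mem true s = count_mem false s.

(* Main.v *)
Require Import Defs.
From mathcomp Require Import all_boot all_algebra zify.
Set Implicit Arguments. Unset Strict Implicit. Unset Printing Implicit Defensive.
Import GRing.Theory.
Local Open Scope ring_scope.

Section S.
Variables (L Nocc : nat).
Definition V : {set 'I_L} := [set p : 'I_L | (Nocc <= p)%N].
Definition virt (T : {set 'I_L}) : nat := #|T :&: V|.

Lemma virt_U1_lo (i : 'I_L) (X : {set 'I_L}) : (i < Nocc)%N -> virt (i |: X) = virt X.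
Proof.
move=> hi; rewrite /virt; have -> // : (i |: X) :&: V = X :&: V.
apply/setP => x; rewrite !inE.
by case: (eqVneq x i) => [->|] //=; rewrite leqNgt hi andbF.
Qed.

Lemma virt_D1_lo (i : 'I_L) (X : {set 'I_L}) : (i < Nocc)%N -> virt (X :\ i) = virt X.
Proof.
move=> hi; rewrite /virt; have -> // : (X :\ i) :&: V = X :&: V.
apply/setP => x; rewrite !inE.
by case: (eqVneq x i) => [->|] //=; rewrite leqNgt hi andbF.
Qed.

Lemma virt_D1_hi (a : 'I_L) (X : {set 'I_L}) : (Nocc <= a)%N -> a \in X -> virt X = (virt (X :\ a)).+1.
Proof.
move=> ha aX; rewrite /virt (cardsD1 a (X :&: V)) inE aX inE ha /= add1n.
have -> // : (X :&: V) :\ a = (X :\ a) :&: V.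
apply/setP => x; rewrite !inE; by case: (x == a).
Qed.

Lemma virt_U1_hi (a : 'I_L) (X : {set 'I_L}) : (Nocc <= a)%N -> a \notin X -> virt (a |: X) = (virt X).+1.
Proof.
move=> ha aX; rewrite /virt.
have -> : (a |: X) :&: V = a |: (X :&: V).
  by apply/setP => x; rewrite !inE; case: eqVneq => [->|] //=; rewrite ha orbT.
by rewrite cardsU1 inE (negbTE aX) add1n.
Qed.

Definition delta (Cs : seq (exop L)) : int :=
  (count (fun e : exop L => ~~ e.1.1) Cs)%:Z - (count (fun e : exop L => e.1.1) Cs)%:Z.

Lemma apply_cat w1 w2 (v : fstate L) : apply_word (w1 ++ w2) v = apply_word w1 (apply_word w2 v).
Proof. by rewrite /apply_word foldr_cat. Qed.

Lemma exop_step (e : exop L) v T : valid_exop Nocc e ->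
  apply_word (exop_word e) v T != 0 ->
  exists T', v T' != 0 /\ (virt T)%:Z = (virt T')%:Z + delta [:: e].
Proof.
case: e => [[d i] a] /andP [/= hi ha].
rewrite /apply_word /delta /=; case: d => /=.
- rewrite /ladder /= /cre /ann; case: ifP => iT; last by rewrite eqxx.
  case: ifP => aX; last by rewrite mulr0 eqxx.
  move=> nz; exists (a |: (T :\ i)); split.
    by apply: contraNneq nz => ->; rewrite !mulr0.
  rewrite virt_U1_hi // ?aX // virt_D1_lo //. lia.
- rewrite /ladder /= /cre /ann; case: ifP => aT; last by rewrite eqxx.
  case: ifP => iX; last by rewrite mulr0 eqxx.
  move=> nz; exists (i |: (T :\ a)); split.
    by apply: contraNneq nz => ->; rewrite !mulr0.
  rewrite virt_U1_lo // (virt_D1_hi ha aT). lia.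
Qed.

Lemma delta_cons e Cs : delta (e :: Cs) = delta [:: e] + delta Cs.
Proof. rewrite /delta /=; case: e.1.1 => /=; lia. Qed.

Lemma chain_step (Cs : seq (exop L)) v T : all (valid_exop Nocc) Cs ->
  apply_word (chain_word Cs) v T != 0 ->
  exists T', v T' != 0 /\ (virt T)%:Z = (virt T')%:Z + delta Cs.
Proof.
elim: Cs T => [|e Cs IH] T /=.
  by move=> _ nz; exists T; split => //; rewrite /delta /=; lia.
move=> /andP [he hC]; rewrite /chain_word /= apply_cat => nz.
have [T1 [nz1 e1]] := exop_step he nz.
have [T2 [nz2 e2]] := IH T1 hC nz1.
exists T2; split => //; rewrite delta_cons; lia.
Qed.

Lemma apply_zero w (v : fstate L) : (forall T, v T = 0) -> forall T, apply_word w v T = 0.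
Proof.
elim: w => [|o w IH] //= hv T; rewrite /ladder /cre /ann.
by case: o.1; case: ifP => _; rewrite ?IH ?mulr0.
Qed.

Lemma virt_vac : virt (vacuum L Nocc) = 0%N.
Proof.
rewrite /virt; apply/eqP; rewrite cards_eq0; apply/eqP/setP => x; rewrite !inE.
by rewrite leqNgt andNb.
Qed.
End S.

Lemma chain_word_cat L (A B : seq (exop L)) : chain_word (A ++ B) = chain_word A ++ chain_word B.
Proof. by rewrite /chain_word map_cat flatten_cat. Qed.

Theorem lemma1 (L Nocc n N K : nat) (C : seq (exop L)) (r s : 'I_N -> 'I_L) :
  (1 <= Nocc)%N -> (Nocc < L)%N ->
  all (valid_exop Nocc) C ->
  size C = (2 * n)%N ->
  count (fun e : exop L => e.1.1) C = n ->
  (1 <= N)%N -> (K <= 2 * n)%N ->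
  ~ is_dyck (paren_word C) ->
  expval Nocc (chain_insert C K r s) = 0.
Proof.
move=> _ _ hv hsz hcnt _ hK hnd.
have hcn : count (fun e : exop L => ~~ e.1.1) C = n.
  have := count_predC (fun e : exop L => e.1.1) C; rewrite hsz hcnt.
  have -> : count (predC (fun e : exop L => e.1.1)) C = count (fun e : exop L => ~~ e.1.1) C by apply: eq_count.
  lia.
have hcm : forall k, count_mem true (take k (paren_word C)) = count (fun e : exop L => e.1.1) (take k C)
   /\ count_mem false (take k (paren_word C)) = count (fun e : exop L => ~~ e.1.1) (take k C).
  move=> k; rewrite /paren_word -map_take !count_map; split; apply: eq_count => e /=;
  by case: e.1.1.
have [k hk] : exists k, (count (fun e : exop L => e.1.1) (take k C) <
                         count (fun e : exop L => ~~ e.1.1) (take k C))%N.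
  case hh: (has (fun k => count (fun e : exop L => e.1.1) (take k C) <
                         count (fun e : exop L => ~~ e.1.1) (take k C))%N (iota 0 (size C).+1)).
    by case/hasP: hh => k _ hk; exists k.
  exfalso; apply: hnd; split.
    move=> k; have [a b] := hcm k; rewrite a b leqNgt.
    case: (leqP k (size C)) => hk.
      apply: (hasPn (negbT hh)); rewrite mem_iota; lia.
    rewrite take_oversize; last lia.
    lia.
  have [a b] := hcm (size C); rewrite !take_oversize ?size_map ?take_size // in a b; rewrite a b.
  lia.
have htot : delta C = 0.
  rewrite /delta hcn hcnt; lia.
have hsplit : delta C = delta (take k C) + delta (drop k C).
  rewrite /delta -{1 2}(cat_take_drop k C) !count_cat; lia.
have hpos : delta (take k C) > 0 by rewrite /delta; lia.
have hvT : all (valid_exop Nocc) (take k C) by rewrite -(cat_take_drop k C) all_cat in hv; case/andP: hv.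
have hvD : all (valid_exop Nocc) (drop k C) by rewrite -(cat_take_drop k C) all_cat in hv; case/andP: hv.
rewrite /expval /chain_insert !apply_cat.
have hb : forall T, basis (vacuum L Nocc) T != 0 -> T = vacuum L Nocc.
  move=> T; rewrite /basis; case: (T =P vacuum L Nocc) => // _; by rewrite eqxx.
case: (leqP K k) => hKk.
- have -> : drop K C = drop K (take k C) ++ drop k C.
    rewrite -{1}(cat_take_drop k C) drop_cat; case: ltnP => h; first by [].
    have h0 : (K - size (take k C) = 0)%N by rewrite size_take_min; lia.
    by rewrite h0 drop0 (drop_oversize (s:=take k C)) //.
  rewrite chain_word_cat apply_cat.
  have hz : forall T, apply_word (chain_word (drop k C)) (basis (vacuum L Nocc)) T = 0.
    move=> T; apply/eqP; apply: contraT => nz.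
    have [T' [nz' e]] := chain_step hvD nz.
    move: e; rewrite (hb _ nz') virt_vac; lia.
  move: hz; set v0 := apply_word _ (basis _) => hz.
  by rewrite -3!apply_cat; apply: apply_zero.
- have -> : take K C = take k C ++ drop k (take K C).
    by rewrite -{1}(cat_take_drop k (take K C)) take_takel // ltnW.
  rewrite chain_word_cat apply_cat; apply/eqP; apply: contraT => nz.
  have [T' [_ e]] := chain_step hvT nz.
  move: e; rewrite virt_vac; lia.
Qed.
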